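(* Under noiseless asynchronous updates, each of the squeezing codes $\mathsf{R}$, $\mathsf{F}$, $\mathsf{M}$ on the $L\times L$ torus has exactly the two configurations $s_+$ (all spins $+1$) and $s_-$ (all spins $-1$) as absorbing states; i.e. a configuration $s$ is left unchanged by every possible single-site update (of either the $\wedge$ or the $\vee$ type, at any site) if and only if $s\in\{s_+,s_-\}$.
   Context: Spins $s_{\mathbf r}\in\{+1,-1\}$ on $\mathbf r\in(\mathbb Z/L\mathbb Z)^2$ (periodic boundary conditions); $\hat{\mathbf x}=(1,0)$, $\hat{\mathbf y}=(0,1)$. Treat $+1$ as true and $-1$ as false, so $\wedge=\min$, $\vee=\max$. Each rule is given by two neighborhoods $\mathcal R^\wedge,\mathcal R^\vee$; a $\wedge$-update at site $\mathbf r$ replaces $s_{\mathbf r}$ by $\bigwedge_{\boldsymbol\delta\in\mathcal R^\wedge}s_{\mathbf r+\boldsymbol\delta}$, and a $\vee$-update replaces it by $\bigvee_{\boldsymbol\delta\in\mathcal R^\vee}s_{\mathbf r+\boldsymbol\delta}$. For $\mathsf{R}$: $\mathcal R^\wedge=\{\hat{\mathbf y},\mathbf 0,-\hat{\mathbf y}\}$, $\mathcal R^\vee=\{\hat{\mathbf x},\mathbf 0,-\hat{\mathbf x}\}$. For $\mathsf{F}$: $\mathcal R^\vee=\{\hat{\mathbf x},-\hat{\mathbf x}-\hat{\mathbf y}\}$, $\mathcal R^\wedge=\{\hat{\mathbf x}+\hat{\mathbf y},-\hat{\mathbf y}\}$. For $\mathsf{M}$: $\mathcal R^\vee=\{\hat{\mathbf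 x},\hat{\mathbf y}\}$, $\mathcal R^\wedge=\{\hat{\mathbf x},-\hat{\mathbf y}\}$. Noiseless asynchronous dynamics: sites are updated at times given by independent Poisson clocks, and each update is a $\wedge$-update or a $\vee$-update with probability $1/2$ each. A configuration is absorbing if no such update can change it. *)

(* Defs.v *)
From mathcomp Require Import all_boot all_order all_algebra.
Set Implicit Arguments. Unset Strict Implicit. Unset Printing Implicit Defensive.
Import GRing.Theory.
Local Open Scope ring_scope.

(* Sites of Z^2; a configuration on the torus (Z/LZ)^2 is represented as an
   L-periodic function on Z^2.  Spins: true = +1, false = -1, so that
   /\ = min = andb and \/ = max = orb. *)
Definition site := (int * int)%type.
Definition config := site -> bool.

Definition shift (r d : site) : site := (r.1 + d.1, r.2 + d.2).

Definition periodic (L : nat) (s : config) : Prop :=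
  forall x y : int, s (x + L%:Z, y) = s (x, y) /\ s (x, y + L%:Z) = s (x, y).

Inductive code := CodeR | CodeF | CodeM.

(* R^/\ neighborhood (offsets), with xhat = (1,0), yhat = (0,1). *)
Definition nbhd_and (c : code) : seq site :=
  match c with
  | CodeR => [:: (0, 1); (0, 0); (0, -1)]
  | CodeF => [:: (1, 1); (0, -1)]
  | CodeM => [:: (1, 0); (0, -1)]
  end.

Definition nbhd_or (c : code) : seq site :=
  match c with
  | CodeR => [:: (1, 0); (0, 0); (-1, 0)]
  | CodeF => [:: (1, 0); (-1, -1)]
  | CodeM => [:: (1, 0); (0, 1)]
  end.

Definition and_update (c : code) (s : config) (r : site) : bool :=
  all (fun d => s (shift r d)) (nbhd_and c).
Definition or_update (c : code) (s : config) (r : site) : bool :=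
  has (fun d => s (shift r d)) (nbhd_or c).

Definition absorbing (c : code) (s : config) : Prop :=
  forall r : site, and_update c s r = s r /\ or_update c s r = s r.

Definition s_plus : config := fun _ => true.
Definition s_minus : config := fun _ => false.

(* Main.v *)
Require Import Defs.
From mathcomp Require Import all_boot all_order all_algebra zify.
From Stdlib Require Import FunctionalExtensionality.
Import GRing.Theory Num.Theory.
Local Open Scope ring_scope.

Lemma propn (P : site -> bool) (dx dy : int) :
  (forall x y, P (x,y) -> P (x+dx, y+dy)) ->
  forall n : nat, forall x y, P (x,y) -> P (x + n%:Z*dx, y + n%:Z*dy).
Proof.
move=> st; elim=> [|n IH] x y h; first by rewrite !mul0r !addr0.
have := st _ _ (IH _ _ h).
have -> : x + n.+1%:Z * dx = x + n%:Z * dx + dx by lia.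
by have -> : y + n.+1%:Z * dy = y + n%:Z * dy + dy by lia.
Qed.

Lemma propz (P : site -> bool) (dx dy : int) :
  (forall x y, P (x,y) -> P (x+dx, y+dy)) ->
  forall n : int, 0 <= n -> forall x y, P (x,y) -> P (x + n*dx, y + n*dy).
Proof. by move=> st [n|n] // _; apply: propn. Qed.

Lemma const_abs c : absorbing c s_plus /\ absorbing c s_minus.
Proof. by case: c; split=> r. Qed.

Lemma propT (P : site -> bool) (dx dy : int) :
  (forall x y, P (x,y) -> P (x+dx, y+dy)) ->
  forall n : int, 0 <= n -> forall x y, P (x,y) -> P (x + n*dx, y + n*dy).
Proof. exact: propz. Qed.

Lemma at_pt (P : site -> bool) a b a' b' : a = a' -> b = b' -> P (a,b) -> P (a',b').
Proof. by move=> -> ->. Qed.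

Theorem mainTheorem3 (L : nat) (hL : (0 < L)%N) (c : code) (s : config) :
  periodic L s -> (absorbing c s <-> s = s_plus \/ s = s_minus).
Proof.
move=> per; split; last first.
  by case=> ->; have [] := const_abs c.
move=> H.
have At : forall d x y, d \in nbhd_and c -> s (x,y) -> s (shift (x,y) d).
  move=> d x y hd h; have [ha _] := H (x,y); move: ha.
  by rewrite /and_update h => /allP; apply.
have Of : forall d x y, d \in nbhd_or c -> ~~ s (x,y) -> ~~ s (shift (x,y) d).
  move=> d x y hd h; have [_ ho] := H (x,y); move: ho.
  by rewrite /or_update (negbTE h) => /hasPn; apply.
suff: forall p q, s p -> s q.
  move=> K; case h0: (s (0,0)).
  - left; apply: functional_extensionality => q; exact: K h0.
  - right; apply: functional_extensionality => q; apply/negbTE/negP => hq.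
    by rewrite (K _ _ hq) in h0.
case=> [p1 p2] [q1 q2] hp; apply/negP => hq.
have tstep : forall dx dy, (forall x y, s (x,y) -> s (shift (x,y) (dx,dy))) ->
   forall n : int, 0 <= n -> forall x y, s (x,y) -> s (x + n*dx, y + n*dy).
  by move=> dx dy st; exact: (@propz s dx dy st).
have fstep : forall dx dy, (forall x y, ~~ s (x,y) -> ~~ s (shift (x,y) (dx,dy))) ->
   forall n : int, 0 <= n -> forall x y, ~~ s (x,y) -> ~~ s (x + n*dx, y + n*dy).
  by move=> dx dy st; exact: (@propz (fun r => ~~ s r) dx dy st).
move/negP: hq => hq.
case: c H At Of => H At Of.
-
  have T1 := tstep 0 1 (fun x y => At (0,1) x y isT).
  have T2 := tstep 0 (-1) (fun x y => At (0,-1) x y isT).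
  have F1 := fstep 1 0 (fun x y => Of (1,0) x y isT).
  have F2 := fstep (-1) 0 (fun x y => Of (-1,0) x y isT).
  have hp' : s (p1, q2).
    case: (lerP p2 q2) => hle.
    - have := T1 (q2 - p2) ltac:(lia) p1 p2 hp; apply: (at_pt s); lia.
    - have := T2 (p2 - q2) ltac:(lia) p1 p2 hp; apply: (at_pt s); lia.
  have hq' : ~~ s (p1, q2).
    case: (lerP q1 p1) => hle.
    - have := F1 (p1 - q1) ltac:(lia) q1 q2 hq; apply: (at_pt (fun r => ~~ s r)); lia.
    - have := F2 (q1 - p1) ltac:(lia) q1 q2 hq; apply: (at_pt (fun r => ~~ s r)); lia.
  by rewrite hp' in hq'.
-
  have T1 := tstep 1 1 (fun x y => At (1,1) x y isT).
  have T2 := tstep 0 (-1) (fun x y => At (0,-1) x y isT).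
  have F1 := fstep 1 0 (fun x y => Of (1,0) x y isT).
  pose m := `|p1 - q1| + `|q2 - p2|.
  pose k := q1 + m - p1.
  have hp1 := T1 k ltac:(lia) p1 p2 hp.
  have hp2 := T2 (k - (q2 - p2)) ltac:(lia) _ _ hp1.
  have hq1 := F1 m ltac:(lia) q1 q2 hq.
  have hq2 : ~~ s (p1 + k * 1 + (k - (q2 - p2)) * 0, p2 + k * 1 + (k - (q2 - p2)) * -1).
    move: hq1; apply: (at_pt (fun r => ~~ s r)); rewrite /k; lia.
  by rewrite hp2 in hq2.
-
  have T1 := tstep 1 0 (fun x y => At (1,0) x y isT).
  have F1 := fstep 1 0 (fun x y => Of (1,0) x y isT).
  have F2 := fstep 0 1 (fun x y => Of (0,1) x y isT).
  have PL : forall x y, s (x, y) -> s (x + 0, y + L%:Z).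
    by move=> x y; rewrite addr0 (proj2 (per x y)).
  have hK : 0 <= `|q2 - p2| * L%:Z by nia.
  have hK2 : q2 - p2 <= `|q2 - p2| * L%:Z by nia.
  have hp0 := @propz s 0 L%:Z PL `|q2 - p2| ltac:(lia) p1 p2 hp.
  move: hK hK2 hp0; move: (`|q2 - p2| * L%:Z) => K hK hK2 hp0.
  have hp1 := T1 `|q1 - p1| ltac:(lia) _ _ hp0.
  have hq1 := F1 (p1 + `|q1 - p1| - q1) ltac:(lia) q1 q2 hq.
  have hq2 := F2 (p2 + K - q2) ltac:(lia) _ _ hq1.
  have hq3 : ~~ s (p1 + `|q2 - p2| * 0 + `|q1 - p1| * 1, p2 + K + `|q1 - p1| * 0).
    move: hq2; apply: (at_pt (fun r => ~~ s r)); lia.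
  by rewrite hp1 in hq3.
Qed.
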